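(* For $n\ge 2$, there is a bijection between the set of signed permutations $\pi=\pi_1\pi_2\cdots\pi_{n-1}\pi_n$ of $\{0,1,\dots,n-1\}$ with $\pi_n=0$ (unbarred) that are representations of signed skew derangements on $[n]$, and the set of derangements of type $B$ on $[n-1]$.
   Context: A signed permutation on a set $S$ of integers is an arrangement of the elements of $S$ in which some entries carry a bar. A derangement of type $B$ on $[m]$ is a signed permutation $\tau_1\cdots\tau_m$ of $[m]$ with $\tau_i\neq i$ for all $i$ (where $\tau_i=\bar i$ is allowed). A signed set on $[n]$ is $[n]$ with some elements barred; for such $X$, $X-1$ is obtained by subtracting $1$ from each element using $\bar i-1=\overline{i-1}$. A signed skew derangement on $[n]$ is a bijection $f:X\to X-1$, for some signed set $X$ on $[n]$, with $f(x)\ne x$ for all $x\in X$. The representation of a bijection $f:X\to X-1$ is the signed permutation $\pi_1\cdots\pi_n$ of $\{0,\dots,n-1\}$ given by $\pi_i=f(\sigma_i)$, where $\sigma_i$ is the element of $X$ with underlying value $i$; this gives a bijection between all such maps $f$ (over all signed sets $X$) and all signed permutations of $\{0,\dots,n-1\}$. *)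

(* Defs.v *)
From mathcomp Require Import all_boot.
Set Implicit Arguments. Unset Strict Implicit. Unset Printing Implicit Defensive.

(* A signed element is a pair (value, barred?) : nat * bool.
   (i, true) stands for \bar i, (i, false) for the unbarred i. *)
Definition selt := (nat * bool)%type.

Definition signed_perm_on (S : seq nat) (s : seq selt) : bool :=
  perm_eq (map fst s) S.

Definition typeB_derangement (m : nat) (t : seq selt) : bool :=
  signed_perm_on (iota 1 m) t &&
  all (fun i => nth (0, false) t i.-1 != (i, false)) (iota 1 m).

Definition signed_set (n : nat) (X : seq selt) : bool :=
  map fst X == iota 1 n.

Definition minus1 (X : seq selt) : seq selt :=
  map (fun x => (x.1.-1, x.2)) X.

Definition bij_onto (f : selt -> selt) (X Y : seq selt) : Prop :=
  {in X, injective f} /\ (forall x, x \in X -> f x \in Y) /\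
  (forall y, y \in Y -> exists2 x, x \in X & f x = y).

Definition signed_skew_derangement (n : nat) (X : seq selt) (f : selt -> selt)
  : Prop :=
  signed_set n X /\ bij_onto f X (minus1 X) /\ (forall x, x \in X -> f x != x).

Definition sigma (X : seq selt) (i : nat) : selt :=
  nth (i, false) X (index i (map fst X)).

Definition representation (n : nat) (X : seq selt) (f : selt -> selt)
  : seq selt :=
  [seq f (sigma X i) | i <- iota 1 n].

Definition repr_set (n : nat) (p : seq selt) : Prop :=
  signed_perm_on (iota 0 n) p /\ last (0, true) p = (0, false) /\
  exists X f, signed_skew_derangement n X f /\ representation n X f = p.

Definition derB_set (m : nat) (t : seq selt) : Prop := typeB_derangement m t.

(* Main.v *)
Require Import Defs.
From mathcomp Require Import all_boot.
From Stdlib Require Import ProofIrrelevance.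

Definition B (s : seq selt) v := (nth (0,false) s (index v (map fst s))).2.

Lemma nth_fst (s : seq selt) i : i < size s -> (nth (0,false) s i).1 = nth 0 (map fst s) i.
Proof. by move=> h; rewrite (nth_map (0,false)). Qed.

Lemma L1 (s : seq selt) x : uniq (map fst s) -> x \in s ->
  nth (0,false) s (index x.1 (map fst s)) = x.
Proof.
elim: s => //= y s IH /andP[ny us]; rewrite in_cons => /orP[/eqP->|xs].
  by rewrite eqxx.
have -> : (y.1 == x.1) = false.
  apply/negbTE; apply: contra ny => /eqP ->; exact: map_f.
by rewrite /= IH.
Qed.

Lemma B_mem s x : uniq (map fst s) -> x \in s -> B s x.1 = x.2.
Proof. by move=> u xs; rewrite /B (@L1 s x). Qed.

Lemma fst_inj (s : seq selt) x y : uniq (map fst s) -> x \in s -> y \in s -> x.1 = y.1 -> x = y.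
Proof. by move=> u xs ys e; rewrite -(@L1 s x u xs) -(@L1 s y u ys) e. Qed.

Lemma B_notin s v : v \notin map fst s -> B s v = false.
Proof. by move=> h; rewrite /B memNindex // nth_default // size_map. Qed.

Lemma B_map s (g : selt -> bool) v :
  B [seq (x.1, g x) | x <- s] v =
  if v \in map fst s then g (nth (0,false) s (index v (map fst s))) else false.
Proof.
have E : map fst [seq (x.1, g x) | x <- s] = map fst s by rewrite -map_comp.
case: ifP => h; last by rewrite B_notin // E h.
by rewrite /B E (nth_map (0,false)) // -(size_map fst) index_mem.
Qed.

Lemma B_rcons0 q v : B (rcons q (0,false)) v = B q v.
Proof.
rewrite /B map_rcons -!cats1 index_cat nth_cat size_map.
case: (boolP (v \in map fst q)) => h.
  by rewrite -(size_map fst) index_mem h.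
rewrite ltnNge leq_addr /= addKn (nth_default _ (s:=q)); last by rewrite memNindex ?h // size_map.
by case: (0 == v).
Qed.

Fixpoint P (t : seq selt) v := match v with 0 => false | u.+1 => B t u.+1 (+) P t u end.

Definition Fq (q : seq selt) := [seq (x.1, x.2 (+) B q x.1.-1) | x <- q].
Definition Gq (t : seq selt) := [seq (x.1, P t x.1) | x <- t].

Definition D m (t : seq selt) := perm_eq (map fst t) (iota 1 m) /\
  forall k, k < m -> nth (0,false) t k != (k.+1, false).
Definition Q m (q : seq selt) := perm_eq (map fst q) (iota 1 m) /\
  forall k, k < m -> nth (0,false) q k != (k.+1, B q k).

Lemma fst_Fq q : map fst (Fq q) = map fst q.
Proof. by rewrite -map_comp. Qed.
Lemma fst_Gq q : map fst (Gq q) = map fst q.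
Proof. by rewrite -map_comp. Qed.

Lemma BGq t m u : perm_eq (map fst t) (iota 1 m) -> u < m -> B (Gq t) u = P t u.
Proof.
move=> pt um; rewrite /Gq B_map; case: ifP => h.
  by rewrite nth_fst ?nth_index // -(size_map fst) index_mem.
case: u um h => // u um; rewrite (perm_mem pt) mem_iota /= add1n ltnS.
by rewrite (leq_trans _ um).
Qed.

Lemma FG m t : D m t -> Fq (Gq t) = t.
Proof.
case=> pt _; rewrite /Fq /Gq -map_comp.
have u : uniq (map fst t) by rewrite (perm_uniq pt) iota_uniq.
rewrite -[RHS]map_id; apply/eq_in_map => -[a b] xt /=.
have : a \in iota 1 m by rewrite -(perm_mem pt); exact: (map_f fst xt).
rewrite mem_iota; case: a xt => // a xt /andP[_ am].
have am' : a < m by rewrite add1n ltnS in am.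
have := @BGq t m a pt am'; rewrite /Gq /= => ->.
by rewrite (@B_mem t (a.+1,b) u xt) /= -addbA addbb addbF.
Qed.

Lemma GF m q : Q m q -> Gq (Fq q) = q.
Proof.
case=> pq _.
have u : uniq (map fst q) by rewrite (perm_uniq pq) iota_uniq.
have HP : forall v, v <= m -> P (Fq q) v = B q v.
  elim=> [|v IH] vm /=.
    by rewrite B_notin // (perm_mem pq) mem_iota.
  rewrite IH ?(ltnW vm) // /Fq B_map.
  have vq : v.+1 \in map fst q by rewrite (perm_mem pq) mem_iota add1n ltnS; exact: vm.
  rewrite vq.
  set y := nth _ _ _.
  have ys : y \in q by rewrite mem_nth // -(size_map fst) index_mem.
  have y1 : y.1 = v.+1 by rewrite /y nth_fst ?nth_index // -(size_map fst) index_mem.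
  rewrite y1 /= -(@B_mem q y u ys) y1.
  by rewrite -addbA addbb addbF.
rewrite /Gq /Fq -map_comp -[RHS]map_id; apply/eq_in_map => -[a b] xt /=.
have : a \in iota 1 m by rewrite -(perm_mem pq); exact: (map_f fst xt).
rewrite mem_iota add1n ltnS => /andP[_ am].
by rewrite HP // (@B_mem q (a,b) u xt).
Qed.
Lemma D_Fq m q : Q m q -> D m (Fq q).
Proof.
case=> pq hq; split; first by rewrite fst_Fq.
have sq : size q = m by rewrite -(size_map fst) (perm_size pq) size_iota.
move=> k km; rewrite /Fq (nth_map (0,false)) ?sq //.
have := hq k km; case: (nth _ q k) => a b /=.
apply: contra => /eqP [-> e]; rewrite /= in e.
by apply/eqP; congr pair; move: e; case: b; case: (B q k).
Qed.

Lemma Q_Gq m t : D m t -> Q m (Gq t).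
Proof.
case=> pt ht; split; first by rewrite fst_Gq.
have u : uniq (map fst t) by rewrite (perm_uniq pt) iota_uniq.
have st : size t = m by rewrite -(size_map fst) (perm_size pt) size_iota.
move=> k km; rewrite (@BGq t m k pt km) /Gq (nth_map (0,false)) ?st //.
have := ht k km; have ys : nth (0,false) t k \in t by rewrite mem_nth ?st.
move: ys; case: (nth _ t k) => a b ys /=.
apply: contra => /eqP [ea e]; subst a.
move: e => /= e; have Bf : B t k.+1 = false by move: e; case: (B t k.+1); case: (P t k).
by have := @B_mem t (k.+1,b) u ys; rewrite Bf /= => ->.
Qed.

Lemma derB_D m t : derB_set m t <-> D m t.
Proof.
rewrite /derB_set /typeB_derangement /signed_perm_on; split.
  case/andP=> pt /allP ha; split => // k km.
  by have := ha k.+1; rewrite mem_iota add1n ltnS; apply; exact: km.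
case=> pt hk; rewrite pt /=; apply/allP => i; rewrite mem_iota.
by case: i => // i; rewrite add1n ltnS /= => km; apply: hk.
Qed.
Lemma C_of_repr n p : repr_set n p -> forall i, i < n -> nth (0,false) p i != (i.+1, B p i).
Proof.
case=> Hperm [_ [X [f [[HX [[_ [Hinto _]] Hfix] Hrep]]]]] i iN.
move/eqP: HX => HX.
have sX : size X = n by rewrite -(size_map fst) HX size_iota.
have uX : uniq (map fst X) by rewrite HX iota_uniq.
set x := nth (0,false) X i.
have xX : x \in X by rewrite mem_nth ?sX.
have x1 : x.1 = i.+1 by rewrite /x nth_fst ?sX // HX nth_iota.
have E1 : nth (0,false) p i = f x.
  rewrite -Hrep /representation (nth_map 0) ?size_iota // nth_iota // /sigma HX.
  have -> : index (1 + i) (iota 1 n) = i.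
    by rewrite -(nth_iota 0 1 iN) index_uniq ?iota_uniq ?size_iota.
  by rewrite (set_nth_default (0,false)) ?sX.
rewrite E1.
have iP : i \in map fst p by rewrite (perm_mem Hperm) mem_iota.
set y := nth (0,false) p (index i (map fst p)).
have yp : y \in p by rewrite mem_nth // -(size_map fst) index_mem.
have y1 : y.1 = i by rewrite /y nth_fst ?nth_index // -(size_map fst) index_mem.
have : y \in minus1 X.
  move: yp; rewrite -{1}Hrep /representation => /mapP [j jI ->].
  apply: Hinto; rewrite /sigma mem_nth // -(size_map fst) index_mem HX //.
case/mapP => z zX ez.
have z1 : z.1 \in iota 1 n by rewrite -HX; exact: map_f.
have zx : z = x.
  apply: (@fst_inj X z x uX zX xX); rewrite x1.
  move: z1; rewrite mem_iota; case: (z.1) ez => // a ez _.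
  by rewrite -y1 ez.
have -> : B p i = x.2 by rewrite /B -/y ez zx.
apply: contra (Hfix x xX) => /eqP ->.
by apply/eqP; case: x x1 {E1 zx xX} => a b /= ->.
Qed.
Lemma repr_of_C n p : perm_eq (map fst p) (iota 0 n) -> last (0,true) p = (0,false) ->
  (forall i, i < n -> nth (0,false) p i != (i.+1, B p i)) -> repr_set n p.
Proof.
move=> Hperm Hlast HC; split => //; split => //.
have sp : size p = n by rewrite -(size_map fst) (perm_size Hperm) size_iota.
have up : uniq (map fst p) by rewrite (perm_uniq Hperm) iota_uniq.
have vals : forall y, y \in p -> y.1 < n.
  by move=> y yp; have := map_f fst yp; rewrite (perm_mem Hperm) mem_iota.
have up' : uniq p by exact: map_uniq up.
pose X := [seq (i, B p i.-1) | i <- iota 1 n].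
pose f := fun x : selt => if x \in X then nth (0,false) p x.1.-1 else (n, false).
have fX : map fst X = iota 1 n by rewrite -map_comp map_id_in.
have memX : forall x, x \in X -> exists2 i, i < n & x = (i.+1, B p i).
  move=> x /mapP [j]; rewrite mem_iota; case: j => // j; rewrite add1n ltnS => jn ->.
  by exists j.
have inX : forall i, i < n -> (i.+1, B p i) \in X.
  by move=> i iN; apply/mapP; exists i.+1; rewrite // mem_iota add1n ltnS.
have fE : forall i, i < n -> f (i.+1, B p i) = nth (0,false) p i.
  by move=> i iN; rewrite /f inX.
exists X, f; split; last first.
  apply: (@eq_from_nth _ (0,false)); first by rewrite size_map size_iota sp.
  rewrite size_map size_iota => k kn.
  rewrite (nth_map 0) ?size_iota // nth_iota // /sigma fX.
  have -> : index (1 + k) (iota 1 n) = k.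
    by rewrite -(nth_iota 0 1 kn) index_uniq ?iota_uniq ?size_iota.
  by rewrite (nth_map 0) ?size_iota // nth_iota // add1n fE.
split; first by rewrite /signed_set fX.
split; last by move=> x /memX [i iN ->]; rewrite fE //; exact: HC.
split.
  move=> x /memX [i iN ->] y; rewrite fE // {1}/f.
  case: ifP => yX; last first.
    move=> e; have : (nth (0,false) p i).1 < n.
      by apply: vals; rewrite mem_nth ?sp.
    by rewrite e ltnn.
  case: (memX y yX) => j jN ->; rewrite /= => /eqP.
  by rewrite nth_uniq ?sp // => /eqP ->.
split.
  move=> x /memX [i iN ->]; rewrite fE //.
  set y := nth _ p i.
  have yp : y \in p by rewrite mem_nth ?sp.
  have y1 : y.1 < n by exact: vals.
  apply/mapP; exists (y.1.+1, B p y.1); first exact: inX.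
  by rewrite /= (@B_mem p y up yp); case: (y).
move=> y /mapP [z zX ->]; case: (memX z zX) => i iN -> /=.
have iP : i \in map fst p by rewrite (perm_mem Hperm) mem_iota.
set k := index i (map fst p).
have kn : k < n by rewrite -sp -(size_map fst) index_mem.
exists (k.+1, B p k); first exact: inX.
rewrite fE //; rewrite /B -/k.
case E: (nth (0,false) p k) => [a b] /=; congr pair.
by have := @nth_fst p k; rewrite sp => /(_ kn); rewrite E nth_index.
Qed.
Lemma repr_to n p : repr_set n.+1 p -> p = rcons (take n p) (0,false) /\ Q n (take n p).
Proof.
move=> hp; have HC := @C_of_repr n.+1 p hp; case: hp => Hperm [Hlast _].
have sp : size p = n.+1 by rewrite -(size_map fst) (perm_size Hperm) size_iota.
have Ep : p = rcons (take n p) (0,false).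
  move: sp Hlast; case/lastP: p {Hperm HC} => // s y.
  rewrite size_rcons last_rcons => -[<-] ->.
  by rewrite -!cats1 take_size_cat.
split => //; split.
  rewrite Ep /signed_perm_on map_rcons in Hperm.
  have : perm_eq (0 :: map fst (take n p)) (0 :: iota 1 n).
    by rewrite -(perm_rcons 0) /=; exact: Hperm.
  by rewrite perm_cons.
move=> k kn; have := HC k (ltnW kn).
by rewrite {1 2}Ep nth_rcons B_rcons0 size_take sp ltnSn kn nth_take.
Qed.

Lemma repr_from n q : Q n q -> repr_set n.+1 (rcons q (0,false)).
Proof.
case=> pq hq.
have sq : size q = n by rewrite -(size_map fst) (perm_size pq) size_iota.
apply: repr_of_C; last first.
- move=> i; rewrite ltnS leq_eqVlt => /orP [/eqP ->|iN].
    by rewrite nth_rcons sq ltnn eqxx.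
  by rewrite nth_rcons sq iN B_rcons0; exact: hq.
- by rewrite last_rcons.
rewrite /signed_perm_on map_rcons (perm_rcons 0) /= perm_cons; exact: pq.
Qed.

Lemma sig_eq (A : Type) (Pr : A -> Prop) (x y : {a | Pr a}) :
  proj1_sig x = proj1_sig y -> x = y.
Proof.
case: x y => a ha [b hb] /= e; subst b; f_equal; exact: proof_irrelevance.
Qed.

Theorem lemma2 (n : nat) (hn : 2 <= n) :
  exists g : {p : seq selt | repr_set n p} -> {t : seq selt | derB_set n.-1 t},
    bijective g.
Proof.
case: n hn => [|m] // _ /=.
pose g := fun x : {p : seq selt | repr_set m.+1 p} =>
  exist (fun t => derB_set m t) (Fq (take m (proj1_sig x)))
    (proj2 (derB_D m _) (@D_Fq m _ (proj2 (@repr_to m _ (proj2_sig x))))).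
pose h := fun y : {t : seq selt | derB_set m t} =>
  exist (fun p => repr_set m.+1 p) (rcons (Gq (proj1_sig y)) (0,false))
    (@repr_from m _ (@Q_Gq m _ (proj1 (derB_D m _) (proj2_sig y)))).
exists g, h.
- case=> p hp; apply: sig_eq => /=.
  have [Ep hQ] := @repr_to m p hp.
  by rewrite (@GF m _ hQ) -Ep.
- case=> t ht; apply: sig_eq => /=.
  have hD := proj1 (derB_D m t) ht.
  rewrite -cats1 take_size_cat ?(@FG m t hD) //.
  by rewrite size_map -(size_map fst) (perm_size (proj1 hD)) size_iota.
Qed.
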